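(* Let $\alpha\in\bar C$ and let $\zeta\in\alpha+\mathbb Z$ be such that $\ell_0\ell_r$ has no roots in $Z:=\{\eta\in\alpha+\mathbb Z\mid \eta<\zeta\}$. Then $\{1,S,\ldots,S^{r-1}\}$ is a local integral basis of $A$ at $Z\cup\{\zeta\}$.
   Context: Let $C$ be a field of characteristic zero and $\bar C$ its algebraic closure. Let $\sigma$ be the automorphism of $C(x)$ with $\sigma(f)(x)=f(x+1)$, and $C(x)[S]$ the Ore algebra with $Sf=\sigma(f)S$ for $f\in C(x)$; put $\Delta=S-1$. Fix $L=\ell_0+\ell_1S+\cdots+\ell_rS^r\in C[x][S]$ with $\ell_0\ell_r\neq0$, and let $A=C(x)[S]/C(x)[S]L$ (a left $C(x)[S]$-module); every element of $A$ is uniquely $f_0+f_1S+\cdots+f_{r-1}S^{r-1}$ with $f_i\in C(x)$. For $\alpha\in\bar C$, an operator $P=\sum_i p_iS^i\in C(x)[S]$ acts on sequences $b:\alpha+\mathbb Z\to\bar C((q))$ ($q$ a new indeterminate) by $(P\cdot b)(z)=\sum_i p_i(z+q)\,b(z+i)$. $\operatorname{Sol}_\alpha(L)$ is the set of such $b$ with $L\cdot b=0$ (an $r$-dimensional $\bar C((q))$-vector space); an element $f\in A$ acts on $b\in\operatorname{Sol}_\alpha(L)$ via any representative. For $a\in\bar C((q))$, $\nu_q(a)$ is the smallest exponent with nonzero coefficient ($\nu_q(0)=+\infty$). The value function is $\operatorname{val}_\alpha(f)=\min_{b\in\operatorname{Sol}_\alpha(L)}\big(\nu_q((f\cdot b)(\alpha))-\liminf_{n\to\infty}\nu_q(b(\alpha-n))\big)$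 (with $\infty-\infty=\infty$). $f$ is (locally) integral at $\alpha$ if $\operatorname{val}_\alpha(f)\ge0$. Let $C(x)_\alpha=\{p/q: p,q\in C[x],\ q(\alpha)\ne0\}$; the integral elements at $\alpha$ form a $C(x)_\alpha$-module $\mathcal O_\alpha$, and a basis of this module is a local integral basis at $\alpha$. For $Z\subseteq\bar C$, a basis of $A$ is a local integral basis at $Z$ if it is one at every $\alpha\in Z$. On $\alpha+\mathbb Z$ we write $\beta<\gamma$ if $\beta-\gamma$ is a negative integer. *)

(* Defs.v *)
From HB Require Import structures.
From mathcomp Require Import all_boot all_order all_algebra.
From mathcomp Require Import fraction.
From Stdlib Require Import ClassicalEpsilon.
Set Implicit Arguments. Unset Strict Implicit. Unset Printing Implicit Defensive.
Import Order.TTheory GRing.Theory Num.Theory.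
Local Open Scope ring_scope.

Inductive xint := NInf | Fin of int | PInf.

Definition xle (a b : xint) : Prop :=
  match a, b with
  | NInf, _ => True
  | _, PInf => True
  | Fin x, Fin y => (x <= y)%R
  | _, _ => False
  end.

(* a - b, with the convention oo - oo = oo *)
Definition xsub (a b : xint) : xint :=
  match a, b with
  | PInf, _ => PInf
  | _, NInf => PInf
  | Fin x, Fin y => Fin (x - y)
  | Fin _, PInf => NInf
  | NInf, _ => NInf
  end.

Definition is_glb (P : xint -> Prop) (l : xint) :=
  (forall v, P v -> xle l v) /\ (forall m, (forall v, P v -> xle m v) -> xle m l).
Definition is_lub (P : xint -> Prop) (l : xint) :=
  (forall v, P v -> xle v l) /\ (forall m, (forall v, P v -> xle v m) -> xle l m).

Definition xinf (P : xint -> Prop) : xint := epsilon (inhabits PInf) (is_glb P).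
Definition xsup (P : xint -> Prop) : xint := epsilon (inhabits PInf) (is_lub P).

Definition xliminf (u : nat -> xint) : xint :=
  xsup (fun y => exists N : nat, y = xinf (fun v => exists n : nat, (N <= n)%N /\ v = u n)).

(* a Laurent series is represented by its coefficient function int -> K
   (coefficient of q^n), subject to being bounded below *)
Definition laurent (K : Type) := int -> K.

Section Laurent.
Variable K : nzRingType.

Definition is_laurent (a : laurent K) : Prop :=
  exists N : int, forall n : int, n < N -> a n = 0.

Definition lzero : laurent K := fun _ => 0.

(* a lower bound for the support (meaningful when is_laurent a) *)
Definition lbound (a : laurent K) : int :=
  epsilon (inhabits 0) (fun N : int => forall n : int, n < N -> a n = 0).

Definition lmul (a b : laurent K) : laurent K :=
  fun n => let N := lbound a in let M := lbound b in
   \sum_(j < (absz (n - N - M)%R).+1) a (N + j%:Z) * b (n - N - j%:Z).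

(* q-adic valuation nu_q : smallest exponent with nonzero coefficient, +oo for 0 *)
Definition nu (a : laurent K) : xint := xinf (fun v => exists n : int, a n != 0 /\ v = Fin n).

(* the power series P(z+q) of a polynomial P in K[x] *)
Definition polyAt (P : {poly K}) (z : K) : laurent K :=
  fun n => match n with Posz k => (P \Po ('X + z%:P))`_k | Negz _ => 0 end.
End Laurent.

Section Setting.
Variables (C : fieldType) (K : closedFieldType) (iota : {rmorphism C -> K}).
(* K plays the role of the algebraic closure \bar C, iota the embedding C -> \bar C *)
Variables (r : nat) (ell : 'I_r.+1 -> {poly C}).
(* L = \sum_(i <= r) ell_i S^i *)

Local Notation RF := {fraction {poly C}}.
Local Notation "p ^i" := (map_poly iota p) (at level 2, format "p ^i").

(* the Laurent expansion  f(z+q)  of a rational function f in C(x) at z in \bar C *)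
Definition ratAt (f : RF) (z : K) : laurent K :=
  epsilon (inhabits (lzero K)) (fun e => is_laurent e /\
    exists p d : {poly C}, d != 0 /\ f = (tofrac p) / (tofrac d) /\
      lmul (polyAt d^i z) e = polyAt p^i z).

Definition in_coset (alpha z : K) : Prop := exists n : int, z = alpha + n%:~R.

(* Sol_alpha(L): sequences b : alpha+Z -> \bar C((q)) with L.b = 0, where
   (L.b)(z) = \sum_i ell_i(z+q) b(z+i) *)
Definition Sol (alpha : K) (b : K -> laurent K) : Prop :=
  (forall z, in_coset alpha z -> is_laurent (b z)) /\
  (forall z, in_coset alpha z ->
     (fun n => \sum_(i < r.+1) lmul (polyAt (ell i)^i z) (b (z + (i : nat)%:R)) n)
     = lzero K).

(* elements of A = C(x)[S]/C(x)[S]L are given by their unique normal form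
   f_0 + f_1 S + ... + f_(r-1) S^(r-1) *)
Definition elemA := 'I_r -> RF.

Definition actA (f : elemA) (b : K -> laurent K) (z : K) : laurent K :=
  fun n => \sum_(i < r) lmul (ratAt (f i) z) (b (z + (i : nat)%:R)) n.

Definition val (alpha : K) (f : elemA) : xint :=
  xinf (fun v => exists b, Sol alpha b /\
     v = xsub (nu (actA f b alpha)) (xliminf (fun n => nu (b (alpha - n%:R))))).

Definition integral_at (alpha : K) (f : elemA) : Prop := xle (Fin 0) (val alpha f).

Definition in_local (alpha : K) (g : RF) : Prop :=
  exists p d : {poly C}, (d^i).[alpha] != 0 /\ g = (tofrac p) / (tofrac d).

Definition lincomb (c : 'I_r -> RF) (B : 'I_r -> elemA) : elemA :=
  fun i => \sum_(j < r) c j * B j i.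

(* B is a basis of the C(x)_alpha-module O_alpha of integral elements at alpha *)
Definition local_integral_basis (alpha : K) (B : 'I_r -> elemA) : Prop :=
  (forall j, integral_at alpha (B j)) /\
  (forall f, integral_at alpha f ->
     exists c : 'I_r -> RF, (forall j, in_local alpha (c j)) /\ f = lincomb c B) /\
  (forall c : 'I_r -> RF, (forall j, in_local alpha (c j)) ->
     lincomb c B = (fun _ => 0) -> forall j, c j = 0).

Definition Spowers : 'I_r -> elemA := fun j i => (i == j)%:R.

End Setting.

(* Main.v *)
Require Import Defs.
From HB Require Import structures.
From mathcomp Require Import all_boot all_order all_algebra.
From mathcomp Require Import fraction generic_quotient zify ring.
From Stdlib Require Import ClassicalEpsilon Classical FunctionalExtensionality.
Set Implicit Arguments. Unset Strict Implicit. Unset Printing Implicit Defensive.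
Import Order.TTheory GRing.Theory Num.Theory.
Local Open Scope ring_scope.

Section Laur.
Variable K : fieldType.
Implicit Types a b c : laurent K.

Definition vge a (m : int) := forall n : int, n < m -> a n = 0.

Lemma vge_mono a m m' : vge a m -> m' <= m -> vge a m'.
Proof. by move=> h le n ltn; apply: h; exact: lt_le_trans ltn le. Qed.

Lemma lbound_spec a : is_laurent a -> vge a (lbound a).
Proof.
move=> h; rewrite /lbound.
exact: (epsilon_spec (inhabits 0) (fun N => forall n, n < N -> a n = 0) h).
Qed.

Lemma vge_laurent a m : vge a m -> is_laurent a.
Proof. by move=> h; exists m. Qed.

Definition cs a b (lo : int) (k : nat) (n : int) :=
  \sum_(j < k) a (lo + j%:Z) * b (n - lo - j%:Z).

Lemma cs_extS a b B lo k n : vge b B -> n - B - lo < k%:Z ->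
  cs a b lo k n = cs a b lo k.+1 n.
Proof.
move=> hb hk; rewrite /cs big_ord_recr /= hb ?mulr0 ?addr0 //; lia.
Qed.

Lemma cs_ext a b B lo k n t : vge b B -> n - B - lo < k%:Z ->
  cs a b lo k n = cs a b lo (k + t) n.
Proof.
move=> hb hk; elim: t => [|t IH]; first by rewrite addn0.
rewrite IH addnS (cs_extS _ hb) //; lia.
Qed.

Lemma cs_shift a b lo k n t : vge a lo ->
  cs a b (lo - t%:Z) (k + t) n = cs a b lo k n.
Proof.
move=> ha; elim: t => [|t IH]; first by rewrite subr0 addn0.
rewrite addnS -IH /cs big_ord_recl /= ha ?mul0r ?add0r; last by lia.
apply: eq_bigr => j _ /=.
congr (a _ * b _); rewrite /bump /=; lia.
Qed.

Lemma cs_eq a b B lo1 lo2 k1 k2 n : vge a lo1 -> vge a lo2 -> vge b B ->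
  n - B - lo1 < k1%:Z -> n - B - lo2 < k2%:Z ->
  cs a b lo1 k1 n = cs a b lo2 k2 n.
Proof.
wlog le21 : lo1 lo2 k1 k2 / lo2 <= lo1.
  move=> W h1 h2 hb c1 c2; case: (lerP lo2 lo1) => l; first exact: W.
  by symmetry; apply: W => //; exact: ltW.
move=> h1 h2 hb c1 c2.
have e : lo2 = lo1 - (absz (lo1 - lo2))%:Z by lia.
rewrite (cs_ext a k2 hb c1) -(cs_shift b (k1 + k2) n (absz (lo1 - lo2)) h1) -e.
rewrite (cs_ext a (k1 + absz (lo1 - lo2)) hb c2); congr cs; lia.
Qed.

Lemma lmulE a b A B k n : vge a A -> vge b B -> n - B - A < k%:Z ->
  lmul a b n = cs a b A k n.
Proof.
move=> ha hb hk.
have la := vge_laurent ha; have lb := vge_laurent hb.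
have hN := lbound_spec la; have hM := lbound_spec lb.
rewrite /lmul /=.
set N := lbound a; set M := lbound b.
have hB' : vge b (Num.max B M).
  move=> m; rewrite lt_max => /orP [] h; [exact: hb | exact: hM].
change (cs a b N (absz (n - N - M)%R).+1 n = cs a b A k n).
apply: (cs_eq hN ha hB'); lia.
Qed.

Definition lone : laurent K := fun n => (n == 0)%:R.

Lemma vge_lone : vge lone 0.
Proof. by move=> n hn; rewrite /lone; case: eqP => // e; move: hn; rewrite e ltxx. Qed.

Lemma lmul0r a n : lmul (lzero K) a n = 0.
Proof. by rewrite /lmul /=; apply: big1 => j _; rewrite /lzero mul0r. Qed.

Lemma lmulr0 a n : lmul a (lzero K) n = 0.
Proof. by rewrite /lmul /=; apply: big1 => j _; rewrite /lzero mulr0. Qed.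

Lemma lmulr1 a n : is_laurent a -> lmul a lone n = a n.
Proof.
move=> la; have hN := lbound_spec la.
set A := Num.min (lbound a) n.
have hA : vge a A by apply: (vge_mono hN); rewrite ge_min lexx.
rewrite (lmulE (k := (absz (n - A)).+1) hA vge_lone); last by lia.
rewrite /cs big_ord_recr /= big1 ?add0r.
  rewrite /lone; have -> : n - A - (absz (n - A))%:Z = 0 by lia.
  rewrite eqxx mulr1; congr a; lia.
move=> j _; rewrite /lone /=.
rewrite (_ : (_ == _) = false) ?mulr0 //.
by apply/eqP; have := ltn_ord j; rewrite /=; lia.
Qed.

Lemma lmul1r a n : is_laurent a -> lmul lone a n = a n.
Proof.
move=> la; have hN := lbound_spec la.
set B := Num.min (lbound a) n.
have hB : vge a B by apply: (vge_mono hN); rewrite ge_min lexx.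
rewrite (lmulE (k := (absz (n - B)).+1) vge_lone hB); last by lia.
rewrite /cs big_ord_recl /= big1 ?addr0.
  by rewrite /lone eqxx mul1r.
move=> j _; rewrite /lone /=.
by rewrite mulr0n mul0r.
Qed.

Lemma lmulrB a b c n : is_laurent a -> is_laurent b -> is_laurent c ->
  lmul a (fun m => b m - c m) n = lmul a b n - lmul a c n.
Proof.
move=> la lb lc.
have ha := lbound_spec la; have hb := lbound_spec lb; have hc := lbound_spec lc.
set B := Num.min (lbound b) (lbound c).
have hb' : vge b B by apply: (vge_mono hb); rewrite ge_min lexx.
have hc' : vge c B by apply: (vge_mono hc); rewrite ge_min lexx orbT.
have hbc : vge (fun m => b m - c m) B by move=> m hm; rewrite hb' // hc' // subr0.
set k := (absz (n - B - lbound a)%R).+1.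
rewrite (lmulE (k := k) ha hbc); last by lia.
rewrite (lmulE (k := k) ha hb'); last by lia.
rewrite (lmulE (k := k) ha hc'); last by lia.
by rewrite /cs -sumrB; apply: eq_bigr => j _; rewrite mulrBr.
Qed.

Lemma lmul_lead a b A B : vge a A -> vge b B ->
  vge (lmul a b) (A + B) /\ lmul a b (A + B) = a A * b B.
Proof.
move=> ha hb; split.
  move=> n hn; rewrite (lmulE (k := 1) ha hb); last by lia.
  by rewrite /cs big_ord1 /= hb ?mulr0 //; lia.
rewrite (lmulE (k := 1) ha hb); last by lia.
rewrite /cs big_ord1 /= addr0; congr (_ * b _); lia.
Qed.

Lemma vge_lmul a b A B : vge a A -> vge b B -> vge (lmul a b) (A + B).
Proof. by move=> ha hb; case: (lmul_lead ha hb). Qed.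

Definition lmin a m := vge a m /\ a m != 0.

Lemma lmin_dec a : is_laurent a -> (forall n, a n = 0) \/ exists m, lmin a m.
Proof.
move=> la; have hN := lbound_spec la; set N := lbound a in hN.
case: (classic (exists n, a n != 0)) => [[n0 hn0]|hno]; last first.
  left=> n; apply/eqP; apply/negPn/negP => h; apply: hno; by exists n.
right.
have ex : exists k : nat, a (N + k%:Z) != 0.
  exists (absz (n0 - N)).
  have -> : N + (absz (n0 - N))%:Z = n0; last by [].
  case: (lerP N n0) => h; first by lia.
  by move: hn0; rewrite hN // eqxx.
case: (ex_minnP ex) => k hk hmin.
exists (N + k%:Z); split => // n hn.
case: (ltrP n N) => h; first exact: hN.
apply/eqP; apply/negPn/negP => hne.
have := hmin (absz (n - N)).
have -> : N + (absz (n - N))%:Z = n by lia.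
move=> /(_ hne); lia.
Qed.

Lemma lmin_lmul a b A B : lmin a A -> lmin b B -> lmin (lmul a b) (A + B).
Proof.
move=> [ha ha0] [hb hb0]; case: (lmul_lead ha hb) => h1 h2.
by split => //; rewrite h2 mulf_neq0.
Qed.

Lemma lmin_uniq a m m' : lmin a m -> lmin a m' -> m = m'.
Proof.
move=> [h1 h1'] [h2 h2']; case: (ltgtP m m') => // l.
  by move: h1'; rewrite h2 ?eqxx.
by move: h2'; rewrite h1 ?eqxx.
Qed.

Lemma lmul_eq0 D x : (exists v, lmin D v) -> is_laurent x ->
  (forall n, lmul D x n = 0) -> forall n, x n = 0.
Proof.
move=> [v hv] lx h; case: (lmin_dec lx) => // [[m hm]].
have [_ ] := lmin_lmul hv hm; by rewrite h eqxx.
Qed.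

End Laur.

Section SRec.
Variables (T : Type) (x0 : T) (F : nat -> (nat -> T) -> T).
Fixpoint hist k : seq T :=
  if k is k'.+1 then rcons (hist k') (F k' (fun i => nth x0 (hist k') i)) else [::].
Definition srec k := nth x0 (hist k.+1) k.
Lemma size_hist k : size (hist k) = k.
Proof. by elim: k => //= k IH; rewrite size_rcons IH. Qed.
Lemma hist_prefix k d i : (i < k)%N -> nth x0 (hist (k + d)) i = nth x0 (hist k) i.
Proof.
move=> lt; elim: d => [|d IH]; first by rewrite addn0.
by rewrite addnS /= nth_rcons size_hist (leq_trans lt (leq_addr _ _)).
Qed.
Lemma srecE : (forall k f g, (forall i, (i < k)%N -> f i = g i) -> F k f = F k g) ->
  forall k, srec k = F k srec.
Proof.
move=> hF k; rewrite /srec /= nth_rcons size_hist ltnn eqxx.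
apply: hF => i lt.
by rewrite -(subnKC lt) hist_prefix.
Qed.
End SRec.

Section Div.
Variable K : fieldType.

Lemma ldiv_ex (D a : laurent K) v : lmin D v -> is_laurent a ->
  exists x, is_laurent x /\ forall n, lmul D x n = a n.
Proof.
move=> [hD hD0] [A hA].
pose F := fun (k : nat) (f : nat -> K) =>
  (a (A + k%:Z) - \sum_(j < k) D (v + j.+1%:Z) * f (k - j.+1)%N) / D v.
pose X := srec 0 F.
have XE : forall k, X k = F k X.
  apply: srecE => k f g h; rewrite /F; congr ((_ - _) / _).
  by apply: eq_bigr => j _; rewrite h //; have := ltn_ord j; lia.
pose x := fun n : int => if A - v <= n then X (absz (n - (A - v))%R) else 0.
have hx : vge x (A - v) by move=> n hn; rewrite /x leNgt hn.
exists x; split; first by exists (A - v).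
move=> n; case: (ltrP n A) => hn.
  rewrite hA //; apply: (vge_lmul hD hx); lia.
set k := absz (n - A)%R.
have xj : forall j : nat, (j <= k)%N -> x (n - v - j%:Z) = X (k - j)%N.
  move=> j hj; rewrite /x ifT; last by lia.
  congr X; lia.
rewrite (lmulE (k := k.+1) hD hx); last by lia.
rewrite /cs big_ord_recl /= (xj 0%N) // subn0.
rewrite (eq_bigr (fun j : 'I_k => D (v + j.+1%:Z) * X (k - j.+1)%N)); last first.
  move=> j _; rewrite /bump /= add1n xj //.
rewrite XE /F addr0 mulrC divfK // subrK; congr a; lia.
Qed.

Definition ldiv (D a : laurent K) : laurent K :=
  epsilon (inhabits (lzero K)) (fun x => is_laurent x /\ forall n, lmul D x n = a n).

Lemma ldiv_spec D a v : lmin D v -> is_laurent a ->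
  is_laurent (ldiv D a) /\ forall n, lmul D (ldiv D a) n = a n.
Proof.
move=> hD ha; rewrite /ldiv.
exact: (epsilon_spec (inhabits (lzero K)) (fun x => is_laurent x /\ forall n, lmul D x n = a n) (ldiv_ex hD ha)).
Qed.

Lemma unit_vge (D x : laurent K) m : vge D 0 -> D 0 != 0 -> is_laurent x ->
  vge (lmul D x) m -> vge x m.
Proof.
move=> hD hD0 lx hm; case: (lmin_dec lx) => [h0 n _|[m0 hm0]]; first exact: h0.
case: (lerP m m0) => l; first exact: (vge_mono hm0.1).
have [_] := lmin_lmul (conj hD hD0) hm0.
by rewrite hm ?eqxx // add0r.
Qed.

Lemma laurent_sum k (F : 'I_k -> laurent K) : (forall i, is_laurent (F i)) ->
  is_laurent (fun n => \sum_(i < k) F i n).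
Proof.
elim: k F => [|k IH] F h; first by exists 0 => n _; rewrite big_ord0.
have [N1 h1] := IH (fun i => F (widen_ord (leqnSn _) i)) (fun i => h _).
have [N2 h2] := h ord_max.
exists (Num.min N1 N2) => n hn; rewrite big_ord_recr /= h2 ?addr0; last by lia.
by have := h1 n; apply; lia.
Qed.

Lemma laurent_lmul (a b : laurent K) : is_laurent a -> is_laurent b -> is_laurent (lmul a b).
Proof. by move=> [A hA] [B hB]; exists (A + B); exact: vge_lmul. Qed.

Lemma laurent_opp (a : laurent K) : is_laurent a -> is_laurent (fun n => - a n).
Proof. by move=> [A hA]; exists A => n hn; rewrite hA ?oppr0. Qed.

Lemma polyAt_vge (p : {poly K}) z : vge (polyAt p z) 0.
Proof. by case=> [m|m] //= hn; lia. Qed.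

Lemma polyAt0 (p : {poly K}) z : polyAt p z 0 = p.[z].
Proof. by rewrite /polyAt /= -horner_coef0 horner_comp !hornerE. Qed.

Lemma polyAt_lmin (p : {poly K}) z : p != 0 -> exists v, lmin (polyAt p z) v.
Proof.
move=> p0; case: (lmin_dec (vge_laurent (polyAt_vge p z))) => [h0|//].
exfalso; move/negP: p0; apply; apply/eqP.
have : p \Po ('X + z%:P) = 0.
  by apply/polyP => i; rewrite coef0; have := h0 (Posz i).
by move/(congr1 (fun q => q \Po ('X - z%:P))); rewrite comp_polyXaddC_K comp_poly0.
Qed.

Lemma polyAtM (p q : {poly K}) z n : polyAt (p * q) z n = lmul (polyAt p z) (polyAt q z) n.
Proof.
case: n => [m|m]; last first.
  by rewrite [LHS]/polyAt; symmetry; apply: (vge_lmul (polyAt_vge p z) (polyAt_vge q z)).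
rewrite (lmulE (k := m.+1) (polyAt_vge p z) (polyAt_vge q z)); last by lia.
rewrite /cs /polyAt comp_polyM coefM; apply: eq_bigr => j _.
rewrite add0r /=.
have -> : Posz m - 0 - Posz j = Posz (m - j)%N by have := ltn_ord j; lia.
by [].
Qed.

End Div.

Lemma xle_trans a b c : xle a b -> xle b c -> xle a c.
Proof. by case: a => [|x|]; case: b => [|y|]; case: c => [|z|] //=; apply: le_trans. Qed.

Lemma xle_refl a : xle a a.
Proof. by case: a => //= x; rewrite lexx. Qed.

Lemma glb_ex P : exists l, is_glb P l.
Proof.
case: (classic (P NInf)) => hN.
  by exists NInf; split => [v _|m hm] //; exact: hm _ hN.
case: (classic (exists n, P (Fin n))) => [[n0 hn0]|hF]; last first.
  exists PInf; split => [v hv|m _]; last by case: m.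
  by case: v hv => // n hn; exfalso; apply: hF; exists n.
case: (classic (exists B, forall n, P (Fin n) -> B <= n)) => [[B hB]|hU]; last first.
  exists NInf; split => [v _|m hm] //.
  case: m hm => // [x|] hm; last by have := hm _ hn0.
  by exfalso; apply: hU; exists x => n hn; exact: (hm _ hn).
pose pk := fun k : nat => if excluded_middle_informative (P (Fin (B + k%:Z))) then true else false.
have ex : exists k, pk k.
  exists (absz (n0 - B)); rewrite /pk; case: excluded_middle_informative => // h.
  by exfalso; apply: h; move: (hB _ hn0) => hb0; have -> : B + (absz (n0 - B)%R)%:Z = n0 by lia.
case: (ex_minnP ex) => k hk hmin.
have Pk : P (Fin (B + k%:Z)).
  by move: hk; rewrite /pk; case: excluded_middle_informative.
exists (Fin (B + k%:Z)); split => [v hv|m hm]; last exact: hm.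
case: v hv => // n hn /=.
have := hB _ hn => hBn.
have : pk (absz (n - B)).
  rewrite /pk; case: excluded_middle_informative => // h; exfalso; apply: h.
  by have -> : B + (absz (n - B)%R)%:Z = n by lia.
by move/hmin; lia.
Qed.

Lemma xinf_spec P : is_glb P (xinf P).
Proof. rewrite /xinf; exact: (epsilon_spec (inhabits PInf) (is_glb P) (glb_ex P)). Qed.

Definition xneg a := match a with NInf => PInf | PInf => NInf | Fin n => Fin (- n) end.
Lemma xnegK a : xneg (xneg a) = a.
Proof. by case: a => //= n; rewrite opprK. Qed.
Lemma xle_neg a b : xle (xneg a) (xneg b) <-> xle b a.
Proof. by case: a; case: b => //= x y; rewrite lerN2. Qed.

Lemma lub_ex P : exists l, is_lub P l.
Proof.
have [l [h1 h2]] := glb_ex (fun v => P (xneg v)).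
exists (xneg l); split.
  move=> v hv; apply/xle_neg; rewrite xnegK; apply: h1 => /=; by rewrite xnegK.
move=> m hm; rewrite -(xnegK m); apply/xle_neg; apply: h2 => v /= hv.
by rewrite -(xnegK v); apply/xle_neg; apply: hm.
Qed.

Lemma xsup_spec P : is_lub P (xsup P).
Proof. rewrite /xsup; exact: (epsilon_spec (inhabits PInf) (is_lub P) (lub_ex P)). Qed.

Section Nu.
Variable K : fieldType.
Lemma nu_le (a : laurent K) n : a n != 0 -> xle (nu a) (Fin n).
Proof. by move=> h; apply: (xinf_spec _).1; exists n. Qed.
Lemma nu_ge (a : laurent K) m : vge a m -> xle (Fin m) (nu a).
Proof.
move=> h; apply: (xinf_spec _).2 => v [n [hn ->]] /=.
by case: (ltrP n m) => // l; move: hn; rewrite h ?eqxx.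
Qed.
End Nu.

Lemma frac_rep (R : idomainType) (x : {fraction R}) :
  exists p d : R, d != 0 /\ x = tofrac p / tofrac d.
Proof.
exists (\n_(repr x)), (\d_(repr x)); split; first exact: denom_ratioP.
rewrite -[x in LHS]reprK.
set y := repr x.
rewrite /tofrac -lock.
rewrite -[X in _ = _ * X]FracField.pi_inv.
change (\pi_({fraction R})%qT y = FracField.mul (\pi_({fraction R})%qT (Ratio \n_y 1)) (\pi_({fraction R})%qT (FracField.invf (Ratio \d_y 1)))).
rewrite -FracField.pi_mul.
rewrite -{1}(Ratio_numden y).
congr (\pi_({fraction R}) _)%qT.
rewrite /FracField.mulf /FracField.invf /= !numden_Ratio ?oner_neq0 ?denom_ratioP //.
by rewrite mulr1 mul1r.
Qed.

Lemma laurent_sub (K : fieldType) (a b : laurent K) : is_laurent a -> is_laurent b ->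
  is_laurent (fun n => a n - b n).
Proof. by move=> [A hA] [B hB]; exists (Num.min A B) => n hn; rewrite hA ?hB ?subr0 //; lia. Qed.

Lemma polyAt0p (K : fieldType) (z : K) n : polyAt 0 z n = 0.
Proof. by case: n => // m; rewrite /polyAt comp_poly0 coef0. Qed.

Section Main.
Variables (C : fieldType) (K : closedFieldType) (iota : {rmorphism C -> K}).
Hypothesis charC0 : [pchar C] =i pred0.
Variables (r : nat) (ell : 'I_r.+1 -> {poly C}).
Hypotheses (ell0 : ell ord0 != 0) (ellr : ell ord_max != 0).
Variables (alpha zeta : K).
Hypothesis zeta_in : in_coset alpha zeta.
Hypothesis noroots : forall eta : K, in_coset alpha eta ->
      (exists k : int, k < 0 /\ eta - zeta = k%:~R) ->
      ~~ root (map_poly iota (ell ord0 * ell ord_max)) eta.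

Local Notation RF := {fraction {poly C}}.
Local Notation E i z := (polyAt (map_poly iota (ell i)) z).

Lemma intK_eq0 (x : int) : (x%:~R : K) = 0 -> x = 0.
Proof.
move=> h.
have hC : (x%:~R : C) = 0 by apply: (fmorph_inj iota); rewrite rmorph_int rmorph0.
have hc := (pcharf0P C).1 charC0.
case: x hC {h} => n hn.
  have : n == 0%N by rewrite -hc; apply/eqP; exact: hn.
  by move/eqP->.
have : (n.+1%:R : C) == 0 by rewrite -oppr_eq0; apply/eqP; exact: hn.
by rewrite hc.
Qed.

Lemma intK_inj (p q : int) : (p%:~R : K) = q%:~R -> p = q.
Proof.
move=> h; apply/eqP; rewrite -subr_eq0; apply/eqP; apply: intK_eq0.
by rewrite intrB h subrr.
Qed.

Definition off (beta z : K) : int := epsilon (inhabits 0) (fun p : int => z = beta + p%:~R).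

Lemma offE beta p : off beta (beta + p%:~R) = p.
Proof.
have := epsilon_spec (inhabits 0) (fun q : int => beta + p%:~R = beta + q%:~R) (ex_intro _ p erefl).
rewrite -/(off beta (beta + p%:~R)) => /addrI /intK_inj h.
by rewrite -h.
Qed.

Lemma posE (beta : K) (p : int) (i : nat) : beta + p%:~R + i%:R = beta + (p + i%:Z)%:~R.
Proof. by rewrite intrD -pmulrn addrA. Qed.

Lemma rootfree eta : in_coset alpha eta -> (exists k : int, k < 0 /\ eta - zeta = k%:~R) ->
  ((map_poly iota (ell ord0)).[eta] != 0) /\ ((map_poly iota (ell ord_max)).[eta] != 0).
Proof.
move=> h1 h2; have := noroots h1 h2.
by rewrite /root rmorphM hornerM mulf_eq0 negb_or => /andP[].
Qed.

Lemma rf_shift beta kb p : in_coset alpha beta -> beta - zeta = kb%:~R -> kb + p < 0 ->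
  ((map_poly iota (ell ord0)).[beta + p%:~R] != 0) /\
  ((map_poly iota (ell ord_max)).[beta + p%:~R] != 0).
Proof.
move=> [n hn] hk hkp; apply: rootfree.
  by exists (n + p); rewrite hn intrD addrA.
exists (kb + p); split => //.
by rewrite addrAC hk intrD.
Qed.

Lemma sol_eqn beta b p n : Sol iota ell beta b ->
  \sum_(i < r.+1) lmul (E i (beta + p%:~R)) (b (beta + (p + (i : nat)%:Z)%:~R)) n = 0.
Proof.
move=> [_ h]; have := congr1 (fun f => f n) (h (beta + p%:~R) (ex_intro _ p erefl)).
rewrite /= /lzero => h'; rewrite -[X in _ = X]h'; apply: eq_bigr => i _; by rewrite posE.
Qed.

Lemma sol_laur beta b p : Sol iota ell beta b -> is_laurent (b (beta + p%:~R)).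
Proof. by move=> [h _]; apply: h; exists p. Qed.

Lemma step beta b p m : Sol iota ell beta b ->
  (map_poly iota (ell ord_max)).[beta + p%:~R] != 0 ->
  (forall i : nat, (i < r)%N -> vge (b (beta + (p + i%:Z)%:~R)) m) ->
  vge (b (beta + (p + r%:Z)%:~R)) m.
Proof.
move=> hs hr hw.
apply: (unit_vge (D := E ord_max (beta + p%:~R))).
- exact: polyAt_vge.
- by rewrite polyAt0.
- exact: sol_laur.
move=> n hn; have := sol_eqn p n hs; rewrite big_ord_recr /= big1 ?add0r //.
move=> i _; apply: (vge_lmul (polyAt_vge _ _) (hw i (ltn_ord i))); by rewrite add0r.
Qed.

Lemma steps beta b p m t : Sol iota ell beta b ->
  (forall s : nat, (s < t)%N -> (map_poly iota (ell ord_max)).[beta + (p + s%:Z)%:~R] != 0) ->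
  (forall i : nat, (i < r)%N -> vge (b (beta + (p + i%:Z)%:~R)) m) ->
  forall i : nat, (i < r + t)%N -> vge (b (beta + (p + i%:Z)%:~R)) m.
Proof.
move=> hs hr hw; elim: t hr => [|t IH] hr i hi; first by apply: hw; rewrite addn0 in hi.
case: (ltnP i (r + t)) => h.
  by apply: IH => // s hs'; apply: hr; lia.
have := step (p := p + t%:Z) (m := m) hs (hr t (ltnSn t)).
rewrite (_ : p + t%:Z + r%:Z = p + i%:Z); last by lia.
apply => j hj; rewrite (_ : p + t%:Z + j%:Z = p + (t + j)%N%:Z); last by lia.
by apply: IH; [move=> s hs'; apply: hr; lia | lia].
Qed.

Lemma negpos (beta : K) (m : nat) : beta - m%:R = beta + (- (m%:Z))%:~R.
Proof. by rewrite intrN -pmulrn. Qed.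

Lemma core1 beta kb b (j : nat) (N : nat) n : in_coset alpha beta -> beta - zeta = kb%:~R -> kb <= 0 ->
  Sol iota ell beta b -> (j < r)%N -> b (beta + j%:R) n != 0 ->
  exists m : nat, (N <= m)%N /\ exists n', n' <= n /\ b (beta - m%:R) n' != 0.
Proof.
move=> hb hk hk0 hs hj hn.
set p := - ((N + r)%N%:Z).
apply: NNPP => hno.
have hw : forall i : nat, (i < r)%N -> vge (b (beta + (p + i%:Z)%:~R)) (n + 1).
  move=> i hi n' hn'; apply: NNPP => hne; apply: hno; exists (N + r - i)%N; split; first lia.
  exists n'; split; first lia.
  rewrite negpos (_ : - ((N + r - i)%N%:Z) = p + i%:Z); last by rewrite /p; lia.
  by apply/eqP.
have := steps (t := (N + j).+1) hs _ hw (i := (N + r + j)%N).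
rewrite (_ : p + (N + r + j)%N%:Z = j%:Z); last by rewrite /p; lia.
rewrite -pmulrn => h; move/eqP: hn; apply; apply: h; last by lia.
- move=> s hs'; apply: (proj2 (rf_shift (p := p + s%:Z) hb hk _)); rewrite /p; lia.
- lia.
Qed.

Lemma ratAt_spec f z : is_laurent (ratAt iota f z) /\
  exists p d : {poly C}, d != 0 /\ f = (tofrac p) / (tofrac d) /\
    lmul (polyAt (map_poly iota d) z) (ratAt iota f z) = polyAt (map_poly iota p) z.
Proof.
have [p [d [d0 ->]]] := frac_rep f.
have dn : (map_poly iota d) != 0 by rewrite map_poly_eq0.
have [v hv] := polyAt_lmin z dn.
have [x [lx hx]] := ldiv_ex (a := polyAt (map_poly iota p) z) hv (vge_laurent (polyAt_vge _ z)).
apply: (epsilon_spec (inhabits (lzero K)) (fun e => is_laurent e /\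
    exists p0 d0 : {poly C}, d0 != 0 /\ (tofrac p) / (tofrac d) = (tofrac p0) / (tofrac d0) /\
      lmul (polyAt (map_poly iota d0) z) e = polyAt (map_poly iota p0) z)).
exists x; split => //; exists p, d; split => //; split => //.
exact: functional_extensionality hx.
Qed.

Lemma ratAt1 z : ratAt iota 1 z = @lone K.
Proof.
have [le [p [d [d0 [h1 h2]]]]] := ratAt_spec 1 z.
have dF : (tofrac d) != 0 by rewrite tofrac_eq0.
have pd : p = d.
  apply/eqP; rewrite -tofrac_eq; apply/eqP.
  by rewrite -[(tofrac p)](divfK dF) -h1 mul1r.
subst p.
have dn : (map_poly iota d) != 0 by rewrite map_poly_eq0.
apply: functional_extensionality => n; apply/eqP; rewrite -subr_eq0; apply/eqP.
move: n; apply: (lmul_eq0 (polyAt_lmin z dn)).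
  by apply: laurent_sub => //; exists 0; exact: vge_lone.
move=> m; rewrite lmulrB //; last by exists 0; exact: vge_lone.
  by rewrite h2 lmulr1 ?subrr //; apply: vge_laurent (polyAt_vge _ z).
by apply: vge_laurent (polyAt_vge _ z).
Qed.

Lemma ratAt0 z : ratAt iota 0 z = lzero K.
Proof.
have [le [p [d [d0 [h1 h2]]]]] := ratAt_spec 0 z.
have dF : (tofrac d) != 0 by rewrite tofrac_eq0.
have p0 : p = 0.
  apply/eqP; rewrite -tofrac_eq0; apply/eqP.
  by rewrite -[(tofrac p)](divfK dF) -h1 mul0r.
subst p.
have dn : (map_poly iota d) != 0 by rewrite map_poly_eq0.
apply: functional_extensionality; apply: (lmul_eq0 (polyAt_lmin z dn)) => // m.
by rewrite h2 rmorph0 polyAt0p.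
Qed.

Lemma actA_Sp beta b (j : 'I_r) : Sol iota ell beta b ->
  actA iota (Spowers C j) b beta = b (beta + (j : nat)%:R).
Proof.
move=> hs; apply: functional_extensionality => n.
rewrite /actA (bigD1 j) //= big1 ?addr0.
  rewrite /Spowers eqxx ratAt1 lmul1r //.
  by have := sol_laur (j%:Z) hs; rewrite -pmulrn.
move=> i hij; rewrite /Spowers (negbTE hij) ratAt0; exact: lmul0r.
Qed.

Lemma xsub_ge0 x L : xle L x -> x <> NInf -> xle (Fin 0) (xsub x L).
Proof. by case: x => [|x|] //; case: L => [|y|] //= h _; rewrite subr_ge0. Qed.

Lemma dir1 beta kb (j : 'I_r) : in_coset alpha beta -> beta - zeta = kb%:~R -> kb <= 0 ->
  integral_at iota ell beta (Spowers C j).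
Proof.
move=> hb hk hk0; rewrite /integral_at /Defs.val.
apply: (xinf_spec _).2 => v [b [hs ->]].
rewrite actA_Sp //.
set c := b (beta + (j : nat)%:R).
have lc : is_laurent c by rewrite /c; have := sol_laur (j%:Z) hs; rewrite -pmulrn.
apply: xsub_ge0; last first.
  case: lc => B hB; have := nu_ge hB; by case: (nu c).
apply: (xsup_spec _).2 => y [N ->].
apply: (xinf_spec _).2 => w [n [hn ->]].
have [m [hNm [n' [hn' hb']]]] := core1 N hb hk hk0 hs (ltn_ord j) hn.
apply: xle_trans; first by apply: (xinf_spec _).1; exists m; split; [exact: hNm | reflexivity].
apply: xle_trans; first exact: nu_le hb'.
done.
Qed.


Section Dir2.
Variables (beta : K) (i0 : 'I_r).

Definition init (k : nat) : laurent K := if k == (i0 : nat) then @lone K else lzero K.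

Definition FR (k : nat) (g : nat -> laurent K) : laurent K :=
  if (k < r)%N then init k else
  ldiv (E ord_max (beta + ((k - r)%N%:Z)%:~R))
    (fun n => - \sum_(i < r) lmul (E (widen_ord (leqnSn r) i) (beta + ((k - r)%N%:Z)%:~R))
                  (g (k - r + i)%N) n).
Definition sR := srec (lzero K) FR.
Definition sv (g : nat -> laurent K) (q : int) :=
  match q with Posz m => sR m | Negz m => g m.+1 end.
Definition FL (k : nat) (g : nat -> laurent K) : laurent K :=
  ldiv (E ord0 (beta + (- k%:Z)%:~R))
    (fun n => - \sum_(i < r) lmul (E (lift ord0 i) (beta + (- k%:Z)%:~R))
                  (sv g (- k%:Z + i.+1%:Z)) n).
Definition sL := srec (lzero K) FL.
Definition s q := sv sL q.
Definition bsol (z : K) := s (off beta z).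

Lemma sRE k : sR k = FR k sR.
Proof.
apply: srecE => {}k f g h; rewrite /FR; case: ifP => // hk.
congr ldiv; apply: functional_extensionality => n; congr (- _).
by apply: eq_bigr => i _; rewrite h //; have := ltn_ord i; lia.
Qed.

Lemma sv_agree k (f g : nat -> laurent K) (i : nat) :
  (forall j, (j < k)%N -> f j = g j) -> sv f (- k%:Z + i.+1%:Z) = sv g (- k%:Z + i.+1%:Z).
Proof.
move=> h; case e: (- k%:Z + i.+1%:Z) => [m|m] //=.
apply: h; move: e; rewrite NegzE; lia.
Qed.

Lemma sLE k : sL k = FL k sL.
Proof.
apply: srecE => {}k f g h; rewrite /FL.
congr ldiv; apply: functional_extensionality => n; congr (- _).
by apply: eq_bigr => i _; rewrite (sv_agree _ h).
Qed.

Lemma lzero_laur : is_laurent (lzero K).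
Proof. by exists 0. Qed.
Lemma lone_laur : is_laurent (@lone K).
Proof. by exists 0; exact: vge_lone. Qed.

Lemma init_vge k : vge (init k) 0.
Proof. by rewrite /init; case: eqP => _; [exact: vge_lone | by []]. Qed.

Lemma E_laur i z : is_laurent (E i z).
Proof. exact: vge_laurent (polyAt_vge _ z). Qed.

Lemma Emax_lmin z : exists v, lmin (E ord_max z) v.
Proof. by apply: polyAt_lmin; rewrite map_poly_eq0. Qed.
Lemma E0_lmin z : exists v, lmin (E ord0 z) v.
Proof. by apply: polyAt_lmin; rewrite map_poly_eq0. Qed.

Lemma sR_laur k : is_laurent (sR k).
Proof.
elim/ltn_ind: k => k IH; rewrite sRE /FR; case: ifP => hk.
  exact: vge_laurent (init_vge k).
have [v hv] := Emax_lmin (beta + ((k - r)%N%:Z)%:~R).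
apply: (ldiv_spec hv _).1; apply: laurent_opp; apply: laurent_sum => i.
apply: laurent_lmul; first exact: E_laur.
by apply: IH; have := ltn_ord i; lia.
Qed.

Lemma sL_laur k : is_laurent (sL k).
Proof.
elim/ltn_ind: k => k IH; rewrite sLE /FL.
have [v hv] := E0_lmin (beta + (- k%:Z)%:~R).
apply: (ldiv_spec hv _).1; apply: laurent_opp; apply: laurent_sum => i.
apply: laurent_lmul; first exact: E_laur.
case e: (- k%:Z + i.+1%:Z) => [m|m] /=; first exact: sR_laur.
by apply: IH; move: e; rewrite NegzE; lia.
Qed.

Lemma s_laur q : is_laurent (s q).
Proof. by case: q => m; [exact: sR_laur | exact: sL_laur]. Qed.

Lemma bsolE p : bsol (beta + p%:~R) = s p.
Proof. by rewrite /bsol offE. Qed.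

Lemma bsol_Sol : Sol iota ell beta bsol.
Proof.
split; first by move=> z [p ->]; rewrite bsolE; exact: s_laur.
move=> z [p ->]; apply: functional_extensionality => n; rewrite /lzero.
under eq_bigr do rewrite posE bsolE.
case: p => [k|k].
  rewrite big_ord_recr /=.
  rewrite sRE /FR ifN; last by rewrite -leqNgt leq_addl.
  rewrite addnK.
  have [v hv] := Emax_lmin (beta + (k%:Z)%:~R).
  rewrite (ldiv_spec hv _).2 /=.
    by rewrite addrN.
  apply: laurent_opp; apply: laurent_sum => i.
  by apply: laurent_lmul; [exact: E_laur | exact: sR_laur].
rewrite big_ord_recl /=.
rewrite subn0 sLE /FL.
have [v hv] := E0_lmin (beta + (Negz k)%:~R).
rewrite (ldiv_spec hv _).2 /=.
  apply/eqP; rewrite addrC addr_eq0 opprK; apply/eqP.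
  by apply: eq_bigr => i _.
apply: laurent_opp; apply: laurent_sum => i.
apply: laurent_lmul; first exact: E_laur.
rewrite -/(s _); exact: s_laur.
Qed.

End Dir2.

Lemma sR_init beta i0 k : (k < r)%N -> sR beta i0 k = init i0 k.
Proof. by move=> hk; rewrite sRE /FR hk. Qed.

Lemma bsol_init beta (i0 i : 'I_r) : bsol beta i0 (beta + (i : nat)%:R) = init i0 i.
Proof. by rewrite pmulrn bsolE /s /= sR_init. Qed.

Lemma sL_vge beta kb i0 : in_coset alpha beta -> beta - zeta = kb%:~R -> kb <= 0 ->
  forall k, (0 < k)%N -> vge (sL beta i0 k) 0.
Proof.
move=> hb hk hk0; elim/ltn_ind => k IH hk1.
rewrite sLE /FL.
have [v hv] := E0_lmin (beta + (- k%:Z)%:~R).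
have hrhs : is_laurent (fun n => - \sum_(i < r) lmul (E (lift ord0 i) (beta + (- k%:Z)%:~R))
                  (sv beta i0 (sL beta i0) (- k%:Z + i.+1%:Z)) n).
  apply: laurent_opp; apply: laurent_sum => i.
  apply: laurent_lmul; first exact: E_laur.
  rewrite -/(s _ _ _); exact: s_laur.
have [hl hd] := ldiv_spec hv hrhs.
apply: (unit_vge (D := E ord0 (beta + (- k%:Z)%:~R))) => //.
- exact: polyAt_vge.
- by rewrite polyAt0; apply: (proj1 (rf_shift hb hk _)); lia.
move=> n hn; rewrite hd /= big1 ?oppr0 // => i _.
apply: (vge_lmul (B := 0) (polyAt_vge _ _)); last by lia.
case e: (- k%:Z + i.+1%:Z) => [m|m] /=.
  rewrite sR_init; first exact: init_vge.
  by have := ltn_ord i; move: e; lia.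
by apply: IH; move: e; rewrite NegzE; lia.
Qed.

Lemma bsol_vge beta kb i0 : in_coset alpha beta -> beta - zeta = kb%:~R -> kb <= 0 ->
  forall m : nat, vge (bsol beta i0 (beta - m%:R)) 0.
Proof.
move=> hb hk hk0 [|k]; rewrite negpos bsolE.
  change (vge (sR beta i0 0) 0); rewrite sR_init; first exact: init_vge.
  by case: i0 => i; lia.
change (vge (sL beta i0 k.+1) 0); exact: (sL_vge i0 hb hk hk0).
Qed.

Lemma actA_b beta (i0 : 'I_r) f :
  actA iota f (bsol beta i0) beta = ratAt iota (f i0) beta.
Proof.
apply: functional_extensionality => n.
rewrite /actA (bigD1 i0) //= big1 ?addr0.
  by rewrite bsol_init /init eqxx lmulr1 //; exact: (ratAt_spec _ _).1.
move=> i hij; rewrite bsol_init /init ifN; first exact: lmulr0.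
exact: hij.
Qed.

Lemma lmin_ext (a b : laurent K) m : (forall n, a n = b n) -> lmin b m -> lmin a m.
Proof. by move=> h [h1 h2]; split; [move=> n hn; rewrite h h1 | rewrite h]. Qed.

Lemma neg_coef beta g : ~ in_local iota beta g -> exists n, n < 0 /\ ratAt iota g beta n != 0.
Proof.
move=> hnl; apply: NNPP => hno.
have hv0 : vge (ratAt iota g beta) 0.
  move=> n hn; apply: NNPP => hne; apply: hno; exists n; split => //; exact/eqP.
apply: hnl.
have [le [p [d [d0 [hg hD]]]]] := ratAt_spec g beta.
case: (eqVneq p 0) => [p0|pn0].
  exists 0, 1; split; first by rewrite rmorph1 hornerC oner_neq0.
  by rewrite hg p0 !tofrac0 !mul0r.
set g0 := gcdp p d.
have g0n : g0 != 0 by rewrite gcdp_eq0 negb_and d0 orbT.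
set p' := p %/ g0; set d' := d %/ g0.
have hp : p = p' * g0 by rewrite divpK ?dvdp_gcdl.
have hd : d = d' * g0 by rewrite divpK ?dvdp_gcdr.
have cop : coprimep p' d' by apply: coprimep_div_gcd; rewrite d0 orbT.
have d'n : d' != 0 by apply: contraNneq d0 => e; rewrite hd e mul0r.
have hg' : g = tofrac p' / tofrac d'.
  rewrite hg hp hd !tofracM invfM mulrACA mulfV ?mulr1 //.
  by rewrite tofrac_eq0.
case: (eqVneq (map_poly iota d').[beta] 0) => hd'0; last by exists p', d'.
exfalso.
have hp'0 : (map_poly iota p').[beta] != 0.
  apply: (coprimep_root (p := map_poly iota d')); last by exact/eqP.
  by rewrite coprimep_map coprimep_sym.
have dn' : map_poly iota d' != 0 by rewrite map_poly_eq0.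
have gn' : map_poly iota g0 != 0 by rewrite map_poly_eq0.
have [a ha] := polyAt_lmin beta dn'.
have [c hc] := polyAt_lmin beta gn'.
have hP' : lmin (polyAt (map_poly iota p') beta) 0.
  by split; [exact: polyAt_vge | rewrite polyAt0].
have a0 : 0 < a.
  case: (ltgtP a 0) => [alt|//|ae].
    by move: ha.2; rewrite polyAt_vge; [rewrite eqxx | exact: alt].
  by move: ha.2; rewrite ae polyAt0 hd'0 eqxx.
have hPl : lmin (polyAt (map_poly iota p) beta) (0 + c).
  apply: (lmin_ext _ (lmin_lmul hP' hc)) => n.
  by rewrite hp rmorphM polyAtM.
have hDl : lmin (polyAt (map_poly iota d) beta) (a + c).
  apply: (lmin_ext _ (lmin_lmul ha hc)) => n.
  by rewrite hd rmorphM polyAtM.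
have := vge_lmul hDl.1 hv0; rewrite hD addr0 => hvP.
by move: hPl.2; rewrite add0r hvP ?eqxx //; lia.
Qed.

Lemma dir2 beta kb f : in_coset alpha beta -> beta - zeta = kb%:~R -> kb <= 0 ->
  integral_at iota ell beta f -> forall i0, in_local iota beta (f i0).
Proof.
move=> hb hk hk0 hint i0; apply: NNPP => hnl.
have [n [hn0 hn]] := neg_coef hnl.
have hs := bsol_Sol beta i0.
set b := bsol beta i0 in hs *.
have hv : xle (Defs.val iota ell beta f)
   (xsub (nu (actA iota f b beta)) (xliminf (fun m : nat => nu (b (beta - m%:R))))).
  by apply: (xinf_spec _).1; exists b; split.
have h0 := xle_trans hint hv.
rewrite /b actA_b -/b in h0.
have hnu := nu_le hn.
have hL : xle (Fin 0) (xliminf (fun m : nat => nu (b (beta - m%:R)))).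
  apply: xle_trans; last by apply: (xsup_spec _).1; exists 0%N; reflexivity.
  apply: (xinf_spec _).2 => w [m [_ ->]]; apply: nu_ge; exact: (bsol_vge i0 hb hk hk0).
move: h0 hnu hL; case: (nu _) => [|x|] //=; case: (xliminf _) => [|y|] //=; lia.
Qed.

End Main.

Lemma lincombSp (C : fieldType) (r : nat) (c : 'I_r -> {fraction {poly C}}) :
  lincomb c (@Spowers C r) = c.
Proof.
apply: functional_extensionality => i; rewrite /lincomb /Spowers (bigD1 i) //= eqxx mulr1.
rewrite big1 ?addr0 // => j hj; by rewrite eq_sym (negbTE hj) mulr0.
Qed.

Theorem mainTheorem1
  (C : fieldType) (K : closedFieldType) (iota : {rmorphism C -> K})
  (charC0 : [pchar C] =i pred0)
  (Kalg : forall z : K, exists p : {poly C}, p != 0 /\ root (map_poly iota p) z)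
  (r : nat) (ell : 'I_r.+1 -> {poly C})
  (ell0_neq0 : ell ord0 != 0) (ellr_neq0 : ell ord_max != 0)
  (alpha zeta : K) (zeta_in : in_coset alpha zeta)
  (noroots : forall eta : K, in_coset alpha eta ->
      (exists k : int, k < 0 /\ eta - zeta = k%:~R) ->
      ~~ root (map_poly iota (ell ord0 * ell ord_max)) eta) :
  forall beta : K,
    (in_coset alpha beta /\ (exists k : int, k < 0 /\ beta - zeta = k%:~R)) \/ beta = zeta ->
    local_integral_basis iota ell beta (@Spowers C r).
Proof.
move=> beta hbeta.
have [kb [hb [hk hk0]]] : exists kb : int, in_coset alpha beta /\ beta - zeta = kb%:~R /\ kb <= 0.
  case: hbeta => [[hb [k [hk0 hk]]]|->].
    by exists k; split => //; split => //; exact: ltW.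
  by exists 0; split => //; split => //; rewrite subrr.
split; first by move=> j; exact: (dir1 ell0_neq0 ellr_neq0 noroots (kb := kb)).
split.
  move=> f hf; exists f; split; last by rewrite lincombSp.
  exact: (dir2 charC0 ell0_neq0 ellr_neq0 noroots hb hk hk0 hf).
by move=> c _; rewrite lincombSp => ->.
Qed.
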